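(* The following two statements are equivalent. (i) For every amphicheiral knot $K$ with Conway polynomial $C(z)=C_K(z)$, there is a polynomial $F\in\mathbb Z_4[z^2]$ such that $F^2=C(z)\,C(z^2)\,C(iz)$ in $\mathbb Z_4[z^2]$. (ii) For every amphicheiral knot $K$ with normalized Alexander polynomial $A(t)=A_K(t)$, the Laurent polynomial $A(t)\,A(-t)\,A(t^2)$ is a square in the ring $\mathbb Z_4[t,t^{-1}]$.
   Context: A knot is amphicheiral if it is isotopic to its mirror image, disregarding string orientation. The Conway polynomial $C(z)$ of a knot lies in $1+z^2\mathbb Z[z^2]$; hence $C(iz)$ and $C(z^2)$ are again integer polynomials in $z^2$, and the product $C(z)C(z^2)C(iz)$ is reduced modulo $4$ to give an element of $\mathbb Z_4[z^2]$. The Alexander polynomial $A(t)$ is normalized so that $A(t)=A(t^{-1})$ and $A(1)=1$; it is related to the Conway polynomial by $A(t)=C(t^{1/2}-t^{-1/2})$. *)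

(* Defs.v *)
From HB Require Import structures.
From mathcomp Require Import all_boot all_order all_algebra.
Set Implicit Arguments. Unset Strict Implicit. Unset Printing Implicit Defensive.
Import Order.TTheory GRing.Theory Num.Theory.
Local Open Scope ring_scope.

(* Conway polynomials.  A Conway polynomial C(z) lies in 1 + z^2 Z[z^2];   *)
(* we represent it by the polynomial  c : {poly int}  in the variable      *)
(* w = z^2, i.e.  C(z) = c(z^2), with constant term c(0) = 1.               *)
(*   C(z^2) = c(z^4) = c(w^2)   -->  c \Po 'X^2                             *)
(*   C(iz)  = c(-z^2) = c(-w)   -->  c \Po (- 'X)                           *)

Definition conway_C_sq (c : {poly int}) : {poly int} := c \Po 'X^2.
Definition conway_C_iz (c : {poly int}) : {poly int} := c \Po (- 'X).

Definition red4 (x : int) : 'Z_4 := x%:~R.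

Definition conway_prod_mod4 (c : {poly int}) : {poly 'Z_4} :=
  map_poly red4 (c * conway_C_sq c * conway_C_iz c).

Definition cond_i (c : {poly int}) : Prop :=
  exists F : {poly 'Z_4}, F ^+ 2 = conway_prod_mod4 c.

(* Laurent polynomials R[t, t^-1], modelled as the localization of R[t] at *)
(* t:  a pair (n, p) denotes  t^-n * p(t).                                 *)

Definition laurent (R : nzRingType) := (nat * {poly R})%type.

Definition leq_laurent (R : nzRingType) (a b : laurent R) : Prop :=
  a.2 * 'X^(b.1) = b.2 * 'X^(a.1).

Definition lconst (R : nzRingType) (x : R) : laurent R := (0%N, x%:P).
Definition ladd (R : nzRingType) (a b : laurent R) : laurent R :=
  ((a.1 + b.1)%N, a.2 * 'X^(b.1) + b.2 * 'X^(a.1)).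
Definition lmul (R : nzRingType) (a b : laurent R) : laurent R :=
  ((a.1 + b.1)%N, a.2 * b.2).
Definition lmap (R S : nzRingType) (f : R -> S) (a : laurent R) : laurent S :=
  (a.1, map_poly f a.2).

Definition leval (R : nzRingType) (p : {poly R}) (u : laurent R) : laurent R :=
  foldr (fun x acc => ladd (lconst x) (lmul u acc)) (lconst 0) p.

(* Normalized Alexander polynomial A(t) = C(t^{1/2} - t^{-1/2}) = c(t - 2 + t^-1),
   since (t^{1/2} - t^{-1/2})^2 = t - 2 + t^-1 = t^-1 (t - 1)^2.               *)
Definition alex_t (c : {poly int}) : laurent int :=
  leval c (1%N, ('X - 1) ^+ 2).
(* A(-t) = c(-t - 2 - t^-1) = c(t^-1 * (-(t + 1)^2)) *)
Definition alex_mt (c : {poly int}) : laurent int :=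
  leval c (1%N, - ('X + 1) ^+ 2).
(* A(t^2) = c(t^2 - 2 + t^-2) = c(t^-2 (t^2 - 1)^2) *)
Definition alex_t2 (c : {poly int}) : laurent int :=
  leval c (2%N, ('X ^+ 2 - 1) ^+ 2).

Definition cond_ii (c : {poly int}) : Prop :=
  exists G : laurent 'Z_4,
    leq_laurent (lmul G G)
      (lmap red4 (lmul (lmul (alex_t c) (alex_mt c)) (alex_t2 c))).

(* Main.v *)
Require Import Defs.
From HB Require Import structures.
From mathcomp Require Import all_boot all_order all_algebra.
From mathcomp Require Import zify ring.
Import GRing.Theory.
Local Open Scope ring_scope.

Section Hom.
Variable R : comNzRingType.
Implicit Types (p r h : {poly R}) (q : {poly R}).

Definition hom (k : nat) q (N : nat) p : {poly R} :=
  \sum_(i < N) p`_i *: (q ^+ i * 'X^(k * (N - i))).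

Lemma hom0 k q N : hom k q N 0 = 0.
Proof. by rewrite /hom big1 // => i _; rewrite coef0 scale0r. Qed.

Lemma homD k q N p r : hom k q N (p + r) = hom k q N p + hom k q N r.
Proof. by rewrite /hom -big_split; apply: eq_bigr => i _; rewrite coefD scalerDl. Qed.

Lemma homZ k q N a p : hom k q N (a *: p) = a *: hom k q N p.
Proof. by rewrite /hom scaler_sumr; apply: eq_bigr => i _; rewrite coefZ scalerA. Qed.

Lemma hom_sum k q N (I : Type) (s : seq I) (P : pred I) (F : I -> {poly R}) :
  hom k q N (\sum_(i <- s | P i) F i) = \sum_(i <- s | P i) hom k q N (F i).
Proof.
elim/big_rec2: _ => [|i y1 y2 _ <-]; first exact: hom0.
exact: homD.
Qed.

Lemma hom_Xn k q N j : (j < N)%N -> hom k q N 'X^j = q ^+ j * 'X^(k * (N - j)).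
Proof.
move=> hj; rewrite /hom (bigD1 (Ordinal hj)) //= coefXn eqxx scale1r big1 ?addr0 //.
move=> i ne; rewrite coefXn (_ : (i == j :> nat) = false) ?scale0r //.
apply/negbTE; apply: contra ne => /eqP e; apply/eqP/val_inj => /=; exact: e.
Qed.

Lemma poly_expand N p : (size p <= N)%N -> p = \sum_(i < N) p`_i *: 'X^i.
Proof.
move=> hp; rewrite -poly_def; apply/polyP => i; rewrite coef_poly.
by case: ltnP => // h; rewrite nth_default // (leq_trans hp h).
Qed.
Arguments poly_expand {N p} _.

Lemma hom_small k q N p : (size p <= N)%N ->
  hom k q N p = \sum_(i < size p) p`_i *: (q ^+ i * 'X^(k * (N - i))).
Proof.
move=> hp; rewrite {1}(poly_expand (leqnn (size p))) hom_sum.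
apply: eq_bigr => i _; rewrite homZ hom_Xn //; exact: (leq_trans (ltn_ord i) hp).
Qed.

Lemma hom_mul k q N M p r : (size p <= N)%N -> (size r <= M)%N ->
  hom k q (N + M) (p * r) = hom k q N p * hom k q M r.
Proof.
move=> hp hr.
have -> : p * r = \sum_(i < N) \sum_(j < M) (p`_i * r`_j) *: 'X^(i + j).
  rewrite {1}(poly_expand hp) {1}(poly_expand hr) mulr_suml; apply: eq_bigr => i _.
  rewrite mulr_sumr; apply: eq_bigr => j _.
  by rewrite -scalerAl -scalerAr scalerA exprD.
rewrite hom_sum {2 3}/hom [in RHS]mulr_suml.
apply: eq_bigr => i _; rewrite hom_sum mulr_sumr; apply: eq_bigr => j _.
have hij : (i + j < N + M)%N by have := ltn_ord i; have := ltn_ord j; lia.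
rewrite homZ (hom_Xn _ _ _ _ hij) -scalerAl -scalerAr scalerA exprD.
have e : (k * (N + M - (i + j)) = k * (N - i) + k * (M - j))%N.
  rewrite -mulnDr; congr (k * _); have := ltn_ord i; have := ltn_ord j; lia.
rewrite e exprD; congr (_ *: _); ring.
Qed.

Lemma hom_ext k q N d p : (size p <= N)%N ->
  hom k q (N + d) p = hom k q N p * 'X^(k * d).
Proof.
move=> hp; case: d => [|d]; first by rewrite addn0 muln0 expr0 mulr1.
rewrite -[p in LHS]mulr1 hom_mul ?size_poly1 //.
by rewrite -(expr0 'X) hom_Xn // expr0 mul1r subn0.
Qed.

Lemma foldr_hom k q (s : seq R) :
  foldr (fun x acc => ladd (lconst x) (lmul (k, q) acc)) (lconst 0) s
  = ((k * size s)%N, \sum_(i < size s) s`_i *: (q ^+ i * 'X^(k * (size s - i)))).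
Proof.
elim: s => [|a s IH] /=; first by rewrite big_ord0 muln0 /lconst polyC0.
rewrite IH /ladd /lmul /lconst /= big_ord_recl /=; congr pair; first by rewrite mulnS.
rewrite expr0 mulr1 mul_polyC subn0 mulnS mul1r; congr (_ + _).
rewrite mulr_sumr; apply: eq_bigr => i _.
by rewrite /bump /= subSS exprS -scalerAr mulrA.
Qed.

Lemma leval_hom k q p : leval p (k, q) = ((k * size p)%N, hom k q (size p) p).
Proof. exact: foldr_hom. Qed.

Lemma hom_compN k q N p : (size p <= N)%N ->
  hom k q N (p \Po - 'X) = hom k (- q) N p.
Proof.
move=> hp; rewrite comp_polyE hom_sum hom_small //; apply: eq_bigr => i _.
rewrite -scaleN1r exprZn !homZ hom_Xn ?(leq_trans (ltn_ord i) hp) //.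
by rewrite -[- q]scaleN1r exprZn -scalerAl scalerA mulrC.
Qed.

Lemma hom_compX2 q N p : (size p <= N)%N ->
  hom 1 q (2 * N) (p \Po 'X^2) = hom 2 (q ^+ 2) N p.
Proof.
move=> hp; rewrite comp_polyE hom_sum hom_small //; apply: eq_bigr => i _.
have hi : (2 * i < 2 * N)%N by have := leq_trans (ltn_ord i) hp; lia.
by rewrite -exprM homZ hom_Xn // -exprM mul1n mulnBr.
Qed.

Lemma hom_XM q L h : (size (h * 'X)%R <= L)%N ->
  'X * hom 1 q L (h * 'X) = q * hom 1 q L h.
Proof.
have [->|hn] := eqVneq h 0; first by rewrite mul0r !hom0 !mulr0.
rewrite size_mulX // => hL.
rewrite {1 2}(poly_expand (leqnn (size h))) mulr_suml !hom_sum mulr_sumr [RHS]mulr_sumr.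
apply: eq_bigr => i _; rewrite -scalerAl -exprSr !homZ -scalerAr -[RHS]scalerAr.
have hi := ltn_ord i.
rewrite !hom_Xn; [|lia|lia].
congr (_ *: _); rewrite !mul1n exprS -(subnSK (_ : (i < L)%N)); last by lia.
rewrite exprS; ring.
Qed.

Lemma hom_inj q L (D : {poly R}) : q \is monic -> q.[1] = 0 -> (size D <= L)%N ->
  hom 1 q L D = 0 -> D = 0.
Proof.
move=> qm q1; elim/poly_ind: D => [//|p c IH] hs h0.
have hpX : (size (p * 'X)%R <= L)%N.
  have [->|pn] := eqVneq p 0; first by rewrite mul0r size_poly0.
  by move: hs; rewrite size_MXaddC size_mulX // (negbTE pn).
have hp : (size p <= L)%N.
  have [->|pn] := eqVneq p 0; first by rewrite size_poly0.
  by move: hpX; rewrite size_mulX //; apply: ltnW.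
have hXM := @hom_XM q L p hpX.
have [L0|Lpos] : L = 0%N \/ (0 < L)%N by case: (L) ; [left|right].
  by apply/eqP; rewrite -size_poly_eq0 -leqn0 -L0.
move: h0; rewrite homD -alg_polyC homZ -(expr0 'X) hom_Xn // expr0 mul1r subn0 mul1n.
have e1 : (hom 1 q L (p * 'X)).[1] = 0.
  by move/(congr1 (fun u => u.[1])): hXM; rewrite !hornerM hornerX q1 mul1r mul0r.
move=> h0; have c0 : c = 0.
  by move/(congr1 (fun u => u.[1])): h0; rewrite hornerD hornerZ hornerXn e1 expr1n mulr1 add0r horner0.
move: h0; rewrite c0 scale0r addr0 => h0.
have : q * hom 1 q L p = q * 0 by rewrite -hXM h0 !mulr0.
move/(monic_lreg qm)/(IH hp) => ->; by rewrite mul0r add0r scale0r.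
Qed.
End Hom.
Arguments hom {R}.
Lemma hom_map (R S : comNzRingType) (f : {rmorphism R -> S}) k (q : {poly R}) N (p : {poly R}) :
  map_poly f (hom k q N p) = hom k (map_poly f q) N (map_poly f p).
Proof.
rewrite /hom rmorph_sum; apply: eq_bigr => i _.
by rewrite /= map_polyZ rmorphM !rmorphXn /= map_polyX coef_map.
Qed.


Local Notation K := 'F_2.

Lemma K2 : (2%:R : {poly K}) = 0.
Proof. by rewrite -polyC_natr (_ : (2%:R : K) = 0) ?polyC0 //; apply: val_inj. Qed.

Lemma dbl0 (y : {poly K}) : y *+ 2 = 0.
Proof. by rewrite -mulr_natr K2 mulr0. Qed.

Lemma sqrD2 (a b : {poly K}) : (a + b) ^+ 2 = a ^+ 2 + b ^+ 2.
Proof.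
have -> : (a + b) ^+ 2 = a ^+ 2 + b ^+ 2 + (a * b) *+ 2 by ring.
by rewrite dbl0 addr0.
Qed.

Lemma deriv_sq (h : {poly K}) : (h ^+ 2)^`() = 0.
Proof. by rewrite deriv_exp dbl0. Qed.

Lemma sq_comp (h : {poly K}) : h \Po 'X^2 = h ^+ 2.
Proof.
elim/poly_ind: h => [|p c IH]; first by rewrite comp_poly0 expr2 mul0r.
rewrite comp_polyD comp_polyM comp_polyX comp_polyC IH sqrD2 exprMn.
congr (_ + _); rewrite -rmorphXn /=; congr (_ %:P).
by case: c => [[|[|//]]] ?; apply: val_inj.
Qed.

Lemma sq_inj (u v : {poly K}) : u ^+ 2 = v ^+ 2 -> u = v.
Proof.
move=> e; have : (u + v) ^+ 2 = 0 by rewrite sqrD2 e -mulr2n dbl0.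
move/eqP; rewrite expf_eq0 /= addr_eq0 => /eqP ->.
by apply/eqP; rewrite eq_sym -addr_eq0 -mulr2n dbl0.
Qed.

Definition pi4 (x : 'Z_4) : K := (val x)%:R.
Definition io (x : K) : 'Z_4 := (val x)%:R.
Definition th (x : 'Z_4) : 'Z_4 := if val x == 2%N then 1 else 0.

Lemma pi4_sub : forall x y, pi4 (x - y) = pi4 x - pi4 y.
Proof. by move=> [[|[|[|[|//]]]] ?] [[|[|[|[|//]]]] ?]; apply: val_inj. Qed.
Lemma pi4_mul : forall x y, pi4 (x * y) = pi4 x * pi4 y.
Proof. by move=> [[|[|[|[|//]]]] ?] [[|[|[|[|//]]]] ?]; apply: val_inj. Qed.
Lemma pi4_1 : pi4 1 = 1.
Proof. by apply: val_inj. Qed.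

HB.instance Definition _ := GRing.isZmodMorphism.Build 'Z_4 K pi4 pi4_sub.
HB.instance Definition _ := GRing.isMonoidMorphism.Build 'Z_4 K pi4 (conj pi4_1 pi4_mul).

Lemma pi4_io x : pi4 (io x) = x.
Proof. by move: x => [[|[|//]] ?]; apply: val_inj. Qed.
Lemma io0 : io 0 = 0. Proof. by apply: val_inj. Qed.
Lemma th0 : th 0 = 0. Proof. by apply: val_inj. Qed.
Lemma th_spec x : pi4 x = 0 -> th x *+ 2 = x.
Proof. by move: x => [[|[|[|[|//]]]] ?] /(congr1 val) //= _; apply: val_inj. Qed.

Lemma Z4_4 : (4%:R : {poly 'Z_4}) = 0.
Proof. by rewrite -polyC_natr (_ : (4%:R : 'Z_4) = 0) ?polyC0 //; apply: val_inj. Qed.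

Lemma red4_sub : forall x y, red4 (x - y) = red4 x - red4 y.
Proof. by move=> x y; rewrite /red4 rmorphB. Qed.
Lemma red4_mul : forall x y, red4 (x * y) = red4 x * red4 y.
Proof. by move=> x y; rewrite /red4 rmorphM. Qed.
Lemma red4_1 : red4 1 = 1.
Proof. by rewrite /red4 rmorph1. Qed.
HB.instance Definition _ := GRing.isZmodMorphism.Build int 'Z_4 red4 red4_sub.
HB.instance Definition _ := GRing.isMonoidMorphism.Build int 'Z_4 red4 (conj red4_1 red4_mul).

Lemma size_map_le (R S : nzRingType) (f : R -> S) (p : {poly R}) :
  f 0 = 0 -> (size (map_poly f p) <= size p)%N.
Proof. by move=> f0; apply/leq_sizeP => i hi; rewrite coef_map_id0 // nth_default. Qed.

Definition Q4 : {poly 'Z_4} := ('X - 1) ^+ 2.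

Lemma key (c : {poly int}) : (0 < size c)%N ->
  lmap red4 (lmul (lmul (alex_t c) (alex_mt c)) (alex_t2 c)) =
   ((1 * size c + 1 * size c + 2 * size c)%N,
    hom 1 Q4 (4 * size c) (conway_prod_mod4 c))
  /\ (size (conway_prod_mod4 c) <= 4 * size c)%N.
Proof.
move=> c0; set N := size c; set cb := map_poly red4 c.
have hcb : (size cb <= N)%N by apply: size_map_le; rewrite /red4.
have hN : (size (cb \Po - 'X) <= N)%N.
  apply: leq_trans (size_comp_poly_leq _ _) _; rewrite size_polyN size_polyX; move: hcb c0; rewrite -/N; case: (size cb) => [|m] /=; lia.
have h2 : (size (cb \Po 'X^2) <= 2 * N)%N.
  apply: leq_trans (size_comp_poly_leq _ _) _; rewrite size_polyXn; move: hcb c0; rewrite -/N; case: (size cb) => [|m] /=; lia.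
have eP : conway_prod_mod4 c = cb * (cb \Po 'X^2) * (cb \Po - 'X).
  by rewrite /conway_prod_mod4 /conway_C_sq /conway_C_iz !rmorphM /= !map_comp_poly map_polyXn rmorphN /= map_polyX.
have hsz : (size (cb * (cb \Po 'X^2))%R <= N + 2 * N)%N.
  apply: leq_trans (size_mul_leq _ _) _; apply: leq_trans (leq_pred _) _.
  apply: leq_trans (leq_add hcb h2) _; lia.
split; last first.
  rewrite eP; apply: leq_trans (size_mul_leq _ _) _; apply: leq_trans (leq_pred _) _.
  apply: leq_trans (leq_add hsz hN) _; lia.
have hQ1 : map_poly red4 (('X - 1) ^+ 2) = Q4.
  by rewrite rmorphXn rmorphB /= map_polyX rmorph1.
have hQ2 : map_poly red4 (- ('X + 1) ^+ 2) = - Q4.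
  rewrite rmorphN rmorphXn rmorphD /= map_polyX rmorph1 /Q4; congr (- _).
  have -> : ('X + 1) ^+ 2 = ('X - 1) ^+ 2 + 4%:R * 'X :> {poly 'Z_4} by ring.
  by rewrite Z4_4 mul0r addr0.
have hQ3 : map_poly red4 (('X ^+ 2 - 1) ^+ 2) = Q4 ^+ 2.
  rewrite rmorphXn rmorphB rmorphXn /= map_polyX rmorph1 /Q4.
  have -> : ('X ^+ 2 - 1) ^+ 2 = (('X - 1) ^+ 2) ^+ 2 + 4%:R * ('X * ('X - 1) ^+ 2) :> {poly 'Z_4} by ring.
  by rewrite Z4_4 mul0r addr0.
rewrite /alex_t /alex_mt /alex_t2 !leval_hom /lmul /lmap /=; congr pair.
rewrite !rmorphM /= !hom_map hQ1 hQ2 hQ3 -/cb -/N.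
rewrite -hom_compN // -hom_compX2 // eP mulrAC -hom_mul // -hom_mul //.
by congr hom; lia.
Qed.

Lemma homN (R : comNzRingType) k (q : {poly R}) N (p : {poly R}) : hom k q N (- p) = - hom k q N p.
Proof. by rewrite -scaleN1r homZ scaleN1r. Qed.

Lemma Q4_monic : Q4 \is monic.
Proof. by rewrite /Q4 monic_exp // -polyC1 monicXsubC. Qed.

Lemma Q4_1 : Q4.[1] = 0.
Proof. by rewrite /Q4 horner_exp hornerD hornerN hornerX hornerC subrr expr0n. Qed.

Lemma cond_ii_iff (c : {poly int}) : (0 < size c)%N -> cond_ii c <->
  exists n (g : {poly 'Z_4}), g * g * 'X^(4 * size c) =
     hom 1 Q4 (4 * size c) (conway_prod_mod4 c) * 'X^(n + n).
Proof.
move=> c0; have [E _] := @key c c0.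
have e4 : (1 * size c + 1 * size c + 2 * size c = 4 * size c)%N by lia.
rewrite /cond_ii; split.
  by move=> [[n g]]; rewrite /leq_laurent E /= e4 => h; exists n, g.
by move=> [n [g h]]; exists (n, g); rewrite /leq_laurent E /= e4.
Qed.

Lemma dir1 (c : {poly int}) : (0 < size c)%N -> cond_i c -> cond_ii c.
Proof.
move=> c0 [F hF]; apply/(@cond_ii_iff c c0).
have [_ hP] := @key c c0.
set P := conway_prod_mod4 c in hF hP *.
exists (size F), (hom 1 Q4 (size F) F).
rewrite -hom_mul // -expr2 hF.
have hPs : (size P <= size F + size F)%N.
  by rewrite -hF expr2; apply: leq_trans (size_mul_leq _ _) (leq_pred _).
have e1 := @hom_ext _ 1 Q4 _ (4 * size c) _ hPs.
have e2 := @hom_ext _ 1 Q4 _ (size F + size F) _ hP.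
rewrite !mul1n in e1 e2; by rewrite -e1 -e2 addnC.
Qed.

Lemma dir2 (c : {poly int}) : (0 < size c)%N -> cond_ii c -> cond_i c.
Proof.
move=> c0 /(@cond_ii_iff c c0) [n [g E]].
have [_ hP] := @key c c0.
move: E hP; set N := size c; set P := conway_prod_mod4 c => E hP.
set M := (4 * N)%N in E hP.
have eM2 : M = (2 * N + 2 * N)%N by rewrite /M; lia.
pose P2 := map_poly pi4 P; pose g2 := map_poly pi4 g.
have hQ2 : map_poly pi4 Q4 = ('X - 1) ^+ 2.
  by rewrite /Q4 rmorphXn rmorphB /= map_polyX rmorph1.
set Q2 := ('X - 1 : {poly K}) ^+ 2 in hQ2.
have E2 : g2 * g2 * 'X^M = hom 1 Q2 M P2 * 'X^(n + n).
  by move/(congr1 (map_poly pi4)): E; rewrite !rmorphM /= !map_polyXn hom_map hQ2.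
set H := hom 1 Q2 M P2 in E2.
have XM : ('X^M : {poly K}) = 'X^(2 * N) ^+ 2 by rewrite -exprM; congr (_ ^+ _); rewrite /M; lia.
have dH : H^`() = 0.
  have : (g2 * g2 * 'X^M)^`() = 0.
    by rewrite XM -expr2 -exprMn deriv_sq.
  rewrite E2 derivM derivXn mulrnDr -mulr2n dbl0 mulr0 addr0 => /eqP.
  by rewrite mulf_eq0 expf_eq0 polyX_eq0 andbF orbF => /eqP.
have hP2 : (size P2 <= M)%N by apply: leq_trans (@size_map_le _ _ pi4 P (rmorph0 _)) hP.
set e := even_poly P2; set o := odd_poly P2.
have eP2 : P2 = e ^+ 2 + o ^+ 2 * 'X by rewrite -(sq_comp e) -(sq_comp o) poly_even_odd.
have he : (size e <= 2 * N)%N.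
  apply/leq_sizeP => i hi; rewrite coef_even_poly nth_default //.
  apply: leq_trans hP2 _; rewrite /M -muln2; lia.
have ho : (size o <= 2 * N)%N.
  apply/leq_sizeP => i hi; rewrite coef_odd_poly nth_default //.
  apply: leq_trans hP2 _; rewrite /M -muln2; lia.
have hoX : (size (o ^+ 2 * 'X)%R <= M)%N.
  have [->|on] := eqVneq o 0; first by rewrite expr0n mul0r size_poly0.
  rewrite size_mulX ?expf_neq0 // expr2.
  have := size_mul_leq o o; move: ho on; rewrite -size_poly_eq0 /M.
  case: (size o) => [|m] //=; lia.
set A := hom 1 Q2 (2 * N) e; set B := hom 1 Q2 (2 * N) o.
have XH : 'X * H = 'X * A ^+ 2 + Q2 * B ^+ 2.
  rewrite /H eP2 homD mulrDr hom_XM // eM2 !expr2 -!hom_mul //.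
have HA : H = A ^+ 2.
  move/(congr1 deriv): XH; rewrite derivM derivX mul1r dH mulr0 addr0 derivD.
  rewrite derivM derivX mul1r deriv_sq mulr0 addr0 /Q2 -exprMn deriv_sq addr0.
  done.
have g2A : g2 * 'X^(2 * N) = A * 'X^n.
  apply: sq_inj; rewrite !exprMn -HA -XM -exprM muln2 -addnn -E2.
  by rewrite expr2.
pose F := map_poly io e.
have hF : map_poly pi4 F = e.
  by apply/polyP => i; rewrite coef_map /= coef_map_id0 ?io0 // pi4_io.
have hFs : (size F <= 2 * N)%N by apply: leq_trans (@size_map_le _ _ io e io0) he.
set u := hom 1 Q4 (2 * N) F * 'X^n.
pose D := g * 'X^(2 * N) - u.
have D0 : map_poly pi4 D = 0.
  by rewrite /D /u rmorphB !rmorphM /= !map_polyXn hom_map hQ2 hF -/A -/g2 g2A subrr.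
pose Kp := map_poly th D.
have DK : D = Kp *+ 2.
  apply/polyP => i; rewrite coefMn coef_map_id0 ?th0 // th_spec //.
  have := congr1 (fun p : {poly K} => p`_i) D0; rewrite /= coef_map coef0; exact.
have gu : (g * 'X^(2 * N)) ^+ 2 = u ^+ 2.
  have -> : g * 'X^(2 * N) = u + Kp *+ 2 by rewrite -DK /D addrC subrK.
  have -> : (u + Kp *+ 2) ^+ 2 = u ^+ 2 + 4%:R * (u * Kp + Kp * Kp) by ring.
  by rewrite Z4_4 mul0r addr0.
have EF : hom 1 Q4 M P * 'X^(n + n) = hom 1 Q4 M (F * F) * 'X^(n + n).
  rewrite -E eM2 hom_mul // -eM2.
  have -> : g * g * 'X^M = (g * 'X^(2 * N)) ^+ 2.
    by rewrite exprMn -exprM expr2; congr (_ * _); congr (_ ^+ _); rewrite /M; lia.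
  by rewrite gu /u exprMn -exprM expr2 muln2 -addnn.
have EF' : hom 1 Q4 M (P - F * F) = 0.
  rewrite homD homN; apply/eqP; rewrite subr_eq0; apply/eqP.
  move: EF; rewrite ![_ * 'X^(n + n)]mulrC; exact: (monic_lreg (monicXn _ _)).
exists F; apply/esym/eqP; rewrite expr2 -subr_eq0; apply/eqP.
apply: (@hom_inj _ Q4 M _ Q4_monic Q4_1 _ EF').
apply: leq_trans (size_polyD _ _) _; rewrite size_polyN geq_max hP /=.
apply: leq_trans (size_mul_leq _ _) _; rewrite eM2; move: hFs; case: (size F) => [|m] /=; lia.
Qed.

Theorem proposition1p2 (Knot : Type) (amphicheiral : Knot -> Prop)
    (conway : Knot -> {poly int})
    (conway0 : forall K : Knot, (conway K).[0] = 1) :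
  (forall K : Knot, amphicheiral K -> cond_i (conway K)) <->
  (forall K : Knot, amphicheiral K -> cond_ii (conway K)).
Proof.
have pos : forall K0, (0 < size (conway K0))%N.
  move=> K0; rewrite size_poly_gt0; apply/eqP => h.
  by move: (conway0 K0); rewrite h horner0.
split=> H K0 aK.
  exact: dir1 (pos K0) (H K0 aK).
exact: dir2 (pos K0) (H K0 aK).
Qed.
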